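(* Let $N,k\ge 10$, let $L\subseteq Nk\mathbb{Z}^d$, and let $\gamma\in\mathbb{Z}^d$ with $0\le\gamma_i<k$ for all $i\le d$. Set $A=\bigcup_{\beta\in L}\big(\beta+[0,Nk)^d\big)$ and $B=\bigcup_{\beta\in L}\big(\beta+\gamma+[-3k,(N+3)k)^d\big)$ (intervals of integers). Then $B\setminus A$ can be tiled by almost $k$-boxes.
   Context: A box in $\mathbb{Z}^d$ is a product of integer intervals. An almost $k$-box is a box all of whose side lengths lie between $k$ and $2k$ and at most one of whose side lengths differs from $k$. A set is tiled by a family of boxes if it is partitioned into translates of boxes from that family. *)

(* Defs.v *)
From mathcomp Require Import all_boot all_order all_algebra.
Set Implicit Arguments. Unset Strict Implicit. Unset Printing Implicit Defensive.
Import Order.TTheory GRing.Theory Num.Theory.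
Local Open Scope ring_scope.

Definition point (d : nat) := 'I_d -> int.

Definition box (d : nat) (a : point d) (l : 'I_d -> nat) : point d -> Prop :=
  fun x => forall i, a i <= x i < a i + (l i)%:Z.

Definition almost_box (k d : nat) (l : 'I_d -> nat) : Prop :=
  (forall i, (k <= l i <= 2 * k)%N) /\
  (forall i j, l i <> k -> l j <> k -> i = j).

(* S is partitioned into translates of almost k-boxes: a family T of tiles
   (corner, side lengths), each an almost k-box, each contained in S, and
   every point of S lies in exactly one tile of T. *)
Definition tiled_by_almost_boxes (k d : nat) (S : point d -> Prop) : Prop :=
  exists T : point d * ('I_d -> nat) -> Prop,
    (forall t, T t -> almost_box k t.2) /\
    (forall t, T t -> forall x, box t.1 t.2 x -> S x) /\
    (forall x, S x -> exists t, [/\ T t, box t.1 t.2 x &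
        forall t', T t' -> box t'.1 t'.2 x -> t' = t]).

(* Main.v *)
Require Import Defs.
From mathcomp Require Import all_boot all_order all_algebra.
Import Order.TTheory GRing.Theory Num.Theory.
Local Open Scope ring_scope.
From mathcomp Require Import zify.
Set Implicit Arguments. Unset Strict Implicit. Unset Printing Implicit Defensive.
Lemma floor_in (K q z : int) : 0 < K -> q*K <= z < q*K + K -> (z %/ K)%Z = q.
Proof.
move=> K0 /andP[h1 h2].
have e := divz_eq z K. have r0 := modz_ge0 z (lt0r_neq0 K0). have r1 := ltz_pmod z K0.
set Q := (z %/ K)%Z in e *. set r := (z %% K)%Z in e r0 r1.
have : Q <= q \/ q + 1 <= Q by lia.
have : q <= Q \/ Q + 1 <= q by lia.
case=> ha; case=> hb; nia.
Qed.
Lemma grid (k a b beta q u v : int) : 0 < k -> (k %| beta)%Z -> (k %| b - a)%Z ->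
  q*k + a <= u < q*k + a + k -> q*k + a <= v < q*k + a + k ->
  a <= u - beta < b -> a <= v - beta < b.
Proof.
move=> k0 /divzK e1 /divzK e2.
set m := (beta %/ k)%Z in e1. set n := ((b - a) %/ k)%Z in e2.
move=> /andP[u1 u2] /andP[v1 v2] /andP[h1 h2].
have : m <= q \/ q + 1 <= m by lia.
have : q + 1 <= m + n \/ m + n <= q by lia.
case=> ha; case=> hb; apply/andP; split; nia.
Qed.
Lemma t1 (t : int) (k : nat) : 0 <= t -> (k%:Z <= t <= (2*k)%N%:Z) -> (k <= `|t|%N <= 2*k)%N.
Proof. move=> h1 h2. lia. Qed.
Lemma t2 (x y s t: int) : (x <= y -> ~~ (s <= y < s + t) -> y < s \/ s + t <= y).
Proof. move=> h1 h2. lia. Qed.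
Lemma slab_arith (K t s a b a' b' u v m : int) : 0 < K -> t <= K ->
  K <= b' - a' -> b - a <= 2 * K ->
  ((a' = a + t /\ b' = b /\ s = a) \/ (a' = a /\ b' = s /\ s + t = b)) ->
  s <= u < s + t -> s <= v < s + t -> a' <= u + m * K < b' -> a' <= v + m * K < b'.
Proof.
move=> K0 tK h1 h2 hc hu hv hm.
have : m <= -2 \/ m = -1 \/ m = 0 \/ m = 1 \/ 2 <= m by lia.
case=> [hm2|[hm2|[hm2|[hm2|hm2]]]].
- have : m * K <= -2 * K by nia. move=> ?; lia.
- have : m * K = - K by rewrite hm2 mulN1r. move=> ?; lia.
- have : m * K = 0 by rewrite hm2 mul0r. move=> ?; lia.
- have : m * K = K by rewrite hm2 mul1r. move=> ?; lia.
- have : 2 * K <= m * K by nia. move=> ?; lia.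
Qed.
From Stdlib Require Import ClassicalEpsilon FunctionalExtensionality.

Definition good {d : nat} (k : nat) (S : point d -> Prop) (tau : point d -> point d * ('I_d -> nat)) :=
  forall x, S x -> [/\ almost_box k (tau x).2, box (tau x).1 (tau x).2 x &
     forall y, box (tau x).1 (tau x).2 y -> S y /\ tau y = tau x].

Lemma good_tiled d k (S : point d -> Prop) tau : good k S tau -> tiled_by_almost_boxes k S.
Proof.
move=> g. exists (fun t => exists x, S x /\ tau x = t); split; [|split].
- by move=> t [x [Sx <-]]; case: (g x Sx).
- by move=> t [x [Sx <-]] y By; case: (g x Sx) => _ _ /(_ y By) [].
- move=> x Sx; exists (tau x); case: (g x Sx) => ab bx H; split => //.
  + by exists x.
  + move=> t' [x' [Sx' <-]] Bx. case: (g x' Sx') => _ _ /(_ x Bx) [_ ->] //.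
Qed.

Lemma good_ext d k (S S' : point d -> Prop) tau : (forall x, S x <-> S' x) -> good k S tau -> good k S' tau.
Proof.
move=> e g x /e Sx; case: (g x Sx) => a b c; split => // y /c [/e ? ?]; by split.
Qed.

Lemma glue d k (X Y Z : point d -> Prop) t1 t2 :
  (forall x, Z x -> Y x) -> (forall x, Y x -> X x) ->
  good k (fun x => X x /\ ~ Y x) t1 -> good k (fun x => Y x /\ ~ Z x) t2 ->
  exists tau, good k (fun x => X x /\ ~ Z x) tau.
Proof.
move=> ZY YX g1 g2.
exists (fun x => if excluded_middle_informative (Y x) then t2 x else t1 x).
move=> x [Xx nZx].
case: (excluded_middle_informative (Y x)) => Yx.
- case: (g2 x (conj Yx nZx)) => a b c; split => // y /c [[Yy nZy] e].
  split; first by split; auto.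
  by case: (excluded_middle_informative (Y y)).
- case: (g1 x (conj Xx Yx)) => a b c; split => // y /c [[Xy nYy] e].
  split; first by split; auto.
  by case: (excluded_middle_informative (Y y)).
Qed.

Definition Sab d (L : point d -> Prop) (a b : point d) : point d -> Prop :=
  fun x => exists beta, L beta /\ forall j, a j <= x j - beta j < b j.

Lemma Sab_mono d L (a b a' b' : point d) : (forall j, a j <= a' j /\ b' j <= b j) ->
  forall x, Sab L a' b' x -> Sab L a b x.
Proof.
move=> h x [be [Lb H]]; exists be; split => // j.
case: (h j) => h1 h2; have := H j; lia.
Qed.

Lemma step d (k K : nat) (L : point d -> Prop) (a b a' b' : point d) (i : 'I_d) (s t : int) :
  (0 < k)%N -> k%:Z <= t <= (2*k)%N%:Z -> t <= K%:Z ->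
  (forall beta, L beta -> forall j, (K%:Z %| beta j)%Z) -> (k%:Z %| K%:Z)%Z ->
  (forall j, j != i -> [/\ a' j = a j, b' j = b j & (k%:Z %| b j - a j)%Z]) ->
  K%:Z <= b' i - a' i -> b i - a i <= 2 * K%:Z ->
  ((a' i = a i + t /\ b' i = b i /\ s = a i) \/ (a' i = a i /\ b' i = s /\ s + t = b i)) ->
  exists tau, good k (fun x => Sab L a b x /\ ~ Sab L a' b' x) tau.
Proof.
move=> k0 ht tK Ldv kK hj hK' hK hc.
have K0 : 0 < K%:Z by lia.
have k0' : 0 < k%:Z by lia.
have kdv : forall beta, L beta -> forall j, (k%:Z %| beta j)%Z.
  by move=> ? /Ldv H j; exact: dvdz_trans kK (H j).
pose tau := fun x : point d =>
  ((fun j => if j == i then ((x j - s) %/ K%:Z)%Z * K%:Z + s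
             else ((x j - a j) %/ k%:Z)%Z * k%:Z + a j),
   (fun j => if j == i then `|t|%N else k)).
exists tau => x [[be [Lbe Hx]] nx].
have Hxi : s <= x i - be i < s + t.
  case: (boolP (s <= x i - be i < s + t)) => // H; exfalso; apply: nx; exists be; split => // j.
  case: (eqVneq j i) => [->|ji]; last by case: (hj j ji) => -> -> _; exact: Hx.
  have := Hx i; case: hc => [[? [? ?]]|[? [? ?]]]; lia.
have ebe : forall j, ((be j %/ K%:Z)%Z * K%:Z) = be j := fun j => divzK (Ldv _ Lbe j).
have fi : forall z, s <= z - be i < s + t -> ((z - s) %/ K%:Z)%Z * K%:Z = be i.
  move=> z hz; rewrite (@floor_in K%:Z (be i %/ K%:Z)%Z (z - s)) ?ebe //; lia.
have fj : forall j z, ((x j - a j) %/ k)%Z * k + a j <= z < ((x j - a j) %/ k)%Z * k + a j + k ->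
    ((z - a j) %/ k)%Z = ((x j - a j) %/ k)%Z.
  move=> j z hz; apply: floor_in => //; lia.
have bxj : forall j, ((x j - a j) %/ k)%Z * k + a j <= x j < ((x j - a j) %/ k)%Z * k + a j + k.
  move=> j; have e := divz_eq (x j - a j) k; have := modz_ge0 (x j - a j) (lt0r_neq0 k0').
  have := ltz_pmod (x j - a j) k0'; lia.
have tabs : (`|t|%N)%:Z = t by rewrite gez0_abs //; lia.
split.
- split => [j|j j']; rewrite /tau /=.
  + case: (j == i); last by lia. apply: t1; lia.
  + by case: (eqVneq j i) => [->|]; case: (eqVneq j' i) => [->|].
- move=> j; rewrite /tau /=; case: (eqVneq j i) => [->|ji]; last exact: bxj.
  rewrite fi // tabs; lia.
- move=> y By.
  have Byi : s <= y i - be i < s + t.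
    by have := By i; rewrite /tau /= eqxx fi // tabs; lia.
  have Byj : forall j, j != i -> ((x j - a j) %/ k)%Z * k + a j <= y j < ((x j - a j) %/ k)%Z * k + a j + k.
    by move=> j ji; have := By j; rewrite /tau /= (negbTE ji).
  split; first split.
  + exists be; split => // j. case: (eqVneq j i) => [->|ji].
      by have := Hx i; case: hc => [[? [? ?]]|[? [? ?]]]; lia.
    case: (hj j ji) => _ _ dv.
    exact: (grid k0' (kdv _ Lbe j) dv (bxj j) (Byj j ji) (Hx j)).
  + move=> [be' [Lbe' Hy']]; apply: nx; exists be'; split => // j.
    case: (eqVneq j i) => [->|ji].
    * set m := ((be i %/ K%:Z)%Z - (be' i %/ K%:Z)%Z).
      have eK : m * K%:Z = be i - be' i by rewrite /m mulrBl ebe (divzK (Ldv _ Lbe' i)).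
      have ex : forall z, z - be' i = (z - be i) + m * K%:Z by move=> z; rewrite eK; lia.
      rewrite ex; apply: (slab_arith K0 tK hK' hK hc Byi Hxi); rewrite -ex; exact: Hy'.
    * case: (hj j ji) => ea eb dv; rewrite ea eb.
      apply: (grid k0' (kdv _ Lbe' j) dv (Byj j ji) (bxj j)); rewrite -ea -eb; exact: Hy'.
  + rewrite /tau; congr pair; apply: functional_extensionality => j /=.
    case: (eqVneq j i) => [->|ji]; first by rewrite !fi.
    by rewrite (fj j (y j)) // Byj.
Qed.
Definition lo (k : nat) (g : int) (r : nat) : int :=
  if r == 0%N then g - (3*k)%N%:Z else if r == 1%N then g - (2*k)%N%:Z else 0.
Definition hi (N k : nat) (g : int) (r : nat) : int :=
  if (r <= 2)%N then g + ((N+3)*k)%N%:Z else if r == 3%N then g + ((N+2)*k)%N%:Z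
  else if r == 4%N then g + ((N+1)*k)%N%:Z else (N*k)%N%:Z.
Lemma lo_mono k g r r' : 0 <= g < k%:Z -> (r <= r')%N -> lo k g r <= lo k g r'.
Proof. move=> hg; rewrite /lo; case: r => [|[|r]]; case: r' => [|[|r']] //= _; lia. Qed.
Lemma hi_mono N k g r r' : 0 <= g -> (r <= r')%N -> hi N k g r' <= hi N k g r.
Proof. move=> hg; rewrite /hi; case: r => [|[|[|[|[|r]]]]]; case: r' => [|[|[|[|[|r']]]]] //= _; nia. Qed.

Definition lvl d (p r : nat) (j : 'I_d) : nat :=
  if (j < p)%N then 5%N else if (j == p :> nat) then r else 0%N.

Theorem lemma6p1 (d N k : nat) (L : point d -> Prop) (gamma : point d) :
  (10 <= N)%N -> (10 <= k)%N ->
  (forall beta, L beta -> forall i, (((N * k)%N)%:Z %| beta i)%Z) ->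
  (forall i, 0 <= gamma i < k%:Z) ->
  let A := fun x : point d => exists beta, L beta /\
             (forall i, 0 <= x i - beta i < ((N * k)%N)%:Z) in
  let B := fun x : point d => exists beta, L beta /\
             (forall i, - ((3 * k)%N)%:Z <= x i - beta i - gamma i < (((N + 3) * k)%N)%:Z) in
  tiled_by_almost_boxes k (fun x => B x /\ ~ A x).
Proof.
move=> hN hk Ldv hg A B.
pose av p r : point d := fun j => lo k (gamma j) (lvl p r j).
pose bv p r : point d := fun j => hi N k (gamma j) (lvl p r j).
pose claim p r := exists tau, good k (fun x => Sab L (av 0%N 0%N) (bv 0%N 0%N) x /\ ~ Sab L (av p r) (bv p r) x) tau.
have kK : (k%:Z %| (N * k)%N%:Z)%Z by rewrite PoszM; apply: dvdz_mull; exact: dvdzz.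
have stepP : forall p r, (p < d)%N -> (r < 5)%N -> claim p r -> claim p r.+1.
  move=> p r hp hr [t1 g1].
  have [t2 g2] : exists tau, good k (fun x => Sab L (av p r) (bv p r) x /\ ~ Sab L (av p r.+1) (bv p r.+1) x) tau.
    clear t1 g1; pose i := Ordinal hp.
    have lvi : forall r', lvl p r' i = r' by move=> r'; rewrite /lvl /= ltnn eqxx.
    have lvj : forall r' j, j != i -> lvl p r' j = (if (j < p)%N then 5%N else 0%N).
      move=> r' j ji; rewrite /lvl; case: ifP => // _.
      by have -> : (j == p :> nat) = false by apply/negbTE; move: ji; apply: contra => /eqP e; apply/eqP/val_inj.
    have hj : forall j, j != i -> [/\ av p r.+1 j = av p r j, bv p r.+1 j = bv p r j &
                                  (k%:Z %| bv p r j - av p r j)%Z].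
      move=> j ji; rewrite /av /bv !lvj //; split => //.
      case: ifP => _; rewrite /lo /hi /=.
      * rewrite (_ : _ - _ = N%:Z * k%:Z); first by apply: dvdz_mull; exact: dvdzz.
        nia.
      * rewrite (_ : _ - _ = (N + 6)%N%:Z * k%:Z); first by apply: dvdz_mull; exact: dvdzz.
        nia.
    have hgi := hg i.
    move: hj hr; case: r => [|[|[|[|[|r]]]]] // hj _.
    + apply: (@step d k (N*k)%N L _ _ _ _ i (gamma i - (3*k)%N%:Z) k%:Z) => //; (try rewrite /av /bv); (try rewrite !lvi); (try unfold lo); (try unfold hi); rewrite /=; try nia.
      all: try (left; split; [nia|split; nia]).
    + apply: (@step d k (N*k)%N L _ _ _ _ i (gamma i - (2*k)%N%:Z) ((2*k)%N%:Z - gamma i)) => //; (try rewrite /av /bv); (try rewrite !lvi); (try unfold lo); (try unfold hi); rewrite /=; try nia.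
      all: try (left; split; [nia|split; nia]).
    + apply: (@step d k (N*k)%N L _ _ _ _ i (gamma i + ((N+2)*k)%N%:Z) k%:Z) => //; (try rewrite /av /bv); (try rewrite !lvi); (try unfold lo); (try unfold hi); rewrite /=; try nia.
      all: try (right; split; [nia|split; nia]).
    + apply: (@step d k (N*k)%N L _ _ _ _ i (gamma i + ((N+1)*k)%N%:Z) k%:Z) => //; (try rewrite /av /bv); (try rewrite !lvi); (try unfold lo); (try unfold hi); rewrite /=; try nia.
      all: try (right; split; [nia|split; nia]).
    + apply: (@step d k (N*k)%N L _ _ _ _ i (N*k)%N%:Z (gamma i + k%:Z)) => //; (try rewrite /av /bv); (try rewrite !lvi); (try unfold lo); (try unfold hi); rewrite /=; try nia.
      all: try (right; split; [nia|split; nia]).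
  apply: (glue _ _ g1 g2); apply: Sab_mono => j; rewrite /av /bv; split.
  - apply: lo_mono; first exact: hg. rewrite /lvl; case: ifP => //; case: ifP => //.
  - apply: hi_mono; first by case/andP: (hg j). rewrite /lvl; case: ifP => //; case: ifP => //.
  - apply: lo_mono; first exact: hg. by rewrite /lvl ltn0 if_same.
  - apply: hi_mono; first by case/andP: (hg j). by rewrite /lvl ltn0 if_same.
have key : forall p, (p <= d)%N -> claim p 0%N.
  elim=> [_|p IH hp].
    by exists (fun _ => (fun _ => 0, fun _ => k)) => x [].
  have c5 : forall r, (r <= 5)%N -> claim p r.
    elim=> [_|r IHr hr]; first exact: IH (ltnW hp).
    by apply: stepP => //; apply: IHr; apply: ltnW.
  have := c5 5%N (leqnn _); rewrite /claim.
  have -> : av p 5%N = av p.+1 0%N.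
    apply: functional_extensionality => j; rewrite /av /lvl if_same ltnS.
    by case: (ltngtP j p).
  have -> : bv p 5%N = bv p.+1 0%N.
    apply: functional_extensionality => j; rewrite /bv /lvl if_same ltnS.
    by case: (ltngtP j p).
  done.
have [tau g] := key d (leqnn d).
apply: (good_tiled (tau := tau)); apply: (good_ext _ g) => x.
have eA : forall y, Sab L (av d 0%N) (bv d 0%N) y <-> A y.
  move=> y; rewrite /Sab /A /av /bv /lvl; split => -[be [Lb H]]; exists be; split => // j;
  have := H j; rewrite ltn_ord /lo /hi /=; lia.
have eB : forall y, Sab L (av 0%N 0%N) (bv 0%N 0%N) y <-> B y.
  move=> y; rewrite /Sab /B /av /bv /lvl; split => -[be [Lb H]]; exists be; split => // j;
  have := H j; rewrite ltn0 if_same /lo /hi /=; lia.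
by rewrite eA eB.
Qed.
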